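(* Let $\Gamma$ be a finite connected non-bipartite tetravalent $G$-half-arc-transitive graph (for some $G\le\mathrm{Aut}(\Gamma)$) of order greater than $12$, with $\mathrm{rad}_G(\Gamma)=3$ and $\mathrm{att}_G(\Gamma)=2$. Then there exist a $2$-fold covering projection $\wp\colon\Gamma\to\Gamma'$ and an arc-transitive group $H\le\mathrm{Aut}(\Gamma')$ which lifts along $\wp$ in such a way that $\wp$ is $H$-split and non-sectional (i.e. $\Gamma$ is a non-sectional $H$-split cover of $\Gamma'$).
   Context: All graphs are finite and simple. For a tetravalent graph $\Gamma$ and $G\le \mathrm{Aut}(\Gamma)$, $\Gamma$ is $G$-half-arc-transitive if $G$ acts transitively on vertices and edges but not on arcs; then the $G$-orbits on arcs give two paired orientations of the edges, each vertex being tail of two and head of two incident edges. A $G$-alternating cycle is a cycle in which every two consecutive edges have a common head or a common tail. All have length $2\,\mathrm{rad}_G(\Gamma)$, and any two sharing a vertex meet in $\mathrm{att}_G(\Gamma)$ vertices. A covering projection $\wp\colon\tilde\Gamma\to\Gamma'$ of connected graphs is a surjective graph homomorphism mapping the neighbourhood of each vertex bijectively onto the neighbourhood of its image; it is $2$-fold if every fibre $\wp^{-1}(x)$ has size $2$. The group $\mathrm{CT}(\wp)$ of covering transformations consists of the automorphisms $\gamma$ of $\tilde\Gamma$ with $\wp\gamma=\wp$. A group $H\le\mathrm{Aut}(\Gamma')$ lifts along $\wp$ if every $h\in H$ has a lift, i.e. some $\tilde h\in\mathrm{Aut}(\tilde\Gamma)$ with $\wp\tilde h=h\wp$; the lifted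 group $\tilde H$ is the group of all lifts of elements of $H$, and it is an extension of $\mathrm{CT}(\wp)$ by $H$. The projection is $H$-split if $\mathrm{CT}(\wp)$ has a complement $\bar H$ in $\tilde H$. Such a complement is sectional if there is a $\bar H$-invariant set $S\subseteq V(\tilde\Gamma)$ meeting each fibre of $\wp$ in exactly one vertex. An $H$-split covering projection is non-sectional if no complement of $\mathrm{CT}(\wp)$ in $\tilde H$ is sectional. *)

(* Defs.v *)
From mathcomp Require Import all_boot all_order all_fingroup.
From mathcomp Require Import gproduct.
Set Implicit Arguments. Unset Strict Implicit. Unset Printing Implicit Defensive.

Section Graphs.
Variable T : finType.
Implicit Types (e : rel T) (G : {set {perm T}}).

Definition simple_graph e := symmetric e /\ irreflexive e.

Definition GAut e : {set {perm T}} :=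
  [set g : {perm T} | [forall x, forall y, e (g x) (g y) == e x y]].

Definition tetravalent e := forall x, #|[set y | e x y]| = 4.

Definition connected_graph e := forall x y, connect e x y.

Definition bipartite e := exists c : T -> bool, forall x y, e x y -> c x != c y.

Definition vertex_transitive G := forall x y, exists2 g, g \in G & g x = y.

Definition edge_transitive G e :=
  forall x y u v, e x y -> e u v ->
    exists2 g, g \in G & (g x = u /\ g y = v) \/ (g x = v /\ g y = u).

Definition arc_transitive G e :=
  forall x y u v, e x y -> e u v -> exists2 g, g \in G & g x = u /\ g y = v.

Definition half_arc_transitive G e :=
  [/\ vertex_transitive G, edge_transitive G e & ~ arc_transitive G e].

(* the orientation given by the G-orbit of the arc (x0,y0): D x y means the
   edge {x,y} is oriented with tail x and head y *)
Definition orient G (x0 y0 : T) (x y : T) : bool :=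
  [exists g in G, (g x0 == x) && (g y0 == y)].

(* a G-alternating cycle w.r.t. the orientation orient G x0 y0, given as the
   cyclic sequence of its (distinct) vertices *)
Definition alt_cycle G e (x0 y0 : T) (s : seq T) :=
  let n := size s in
  let D := orient G x0 y0 in
  [/\ 3 <= n, uniq s, path.cycle e s &
      forall i, i < n ->
        let a := nth x0 s ((i + n.-1) %% n) in
        let b := nth x0 s i in
        let c := nth x0 s (i.+1 %% n) in
        (D a b && D c b) || (D b a && D b c)].

Definition cycle_edges (x0 : T) (s : seq T) : {set T * T} :=
  [set p : T * T | [exists i : 'I_(size s),
     (p == (nth x0 s i, nth x0 s (i.+1 %% size s))) ||
     (p == (nth x0 s (i.+1 %% size s), nth x0 s i))]].

(* rad_G(Gamma) = r : alternating cycles exist and all have length 2r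
   (for the orientation given by either G-orbit on arcs) *)
Definition rad_eq G e (r : nat) :=
  forall x0 y0, e x0 y0 ->
    (exists s, alt_cycle G e x0 y0 s) /\
    (forall s, alt_cycle G e x0 y0 s -> size s = 2 * r).

(* att_G(Gamma) = a : two distinct alternating cycles sharing a vertex exist,
   and any two distinct alternating cycles sharing a vertex meet in a vertices *)
Definition att_eq G e (a : nat) :=
  forall x0 y0, e x0 y0 ->
    (exists s1 s2, [/\ alt_cycle G e x0 y0 s1, alt_cycle G e x0 y0 s2,
                       cycle_edges x0 s1 != cycle_edges x0 s2 &
                       exists v, (v \in s1) && (v \in s2)]) /\
    (forall s1 s2, alt_cycle G e x0 y0 s1 -> alt_cycle G e x0 y0 s2 ->
       cycle_edges x0 s1 != cycle_edges x0 s2 ->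
       (exists v, (v \in s1) && (v \in s2)) ->
       #|[set v | (v \in s1) && (v \in s2)]| = a).

End Graphs.

Section Covers.
Variables (T T' : finType) (e : rel T) (e' : rel T') (p : T -> T').

Definition covering_projection :=
  [/\ connected_graph e, connected_graph e',
      forall y, exists x, p x = y,
      forall x y, e x y -> e' (p x) (p y) &
      forall x, {in [set y | e x y] &, injective p} /\
                p @: [set y | e x y] = [set y' | e' (p x) y']].

Definition k_fold (k : nat) := forall y : T', #|[set x | p x == y]| = k.

Definition CT : {set {perm T}} :=
  [set g in GAut e | [forall x, p (g x) == p x]].

Definition is_lift (h : {perm T'}) (g : {perm T}) := forall x, p (g x) = h (p x).

Definition lifts (H : {set {perm T'}}) :=
  forall h, h \in H -> exists2 g, g \in GAut e & is_lift h g.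

Definition lifted_group (H : {set {perm T'}}) : {set {perm T}} :=
  [set g in GAut e | [exists h in H, [forall x, p (g x) == h (p x)]]].

Definition H_split (H : {set {perm T'}}) :=
  lifts H /\ complements_to_in CT (lifted_group H) != set0.

Definition sectional (K : {set {perm T}}) :=
  exists S : {set T}, (forall g x, g \in K -> x \in S -> g x \in S) /\
    (forall y : T', #|[set x in S | p x == y]| = 1).

Definition nonsectional_split (H : {set {perm T'}}) :=
  H_split H /\
  forall K : {group {perm T}}, K \in complements_to_in CT (lifted_group H) ->
    ~ sectional K.

End Covers.

(* Main.v *)
Require Import Defs.
From mathcomp Require Import all_boot all_order all_fingroup.
From mathcomp Require Import gproduct.
From mathcomp Require Import zify.
Set Implicit Arguments. Unset Strict Implicit. Unset Printing Implicit Defensive.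

Section Hex.
Variable T : finType.

Lemma uniq6 (a b c d e f : T) : uniq [:: a; b; c; d; e; f] ->
  [/\ a != b, a != c, a != d, a != e & a != f] /\
  [/\ b != c, b != d, b != e & b != f] /\
  [/\ c != d, c != e & c != f] /\ [/\ d != e, d != f & e != f].
Proof.
rewrite /= !inE !negb_or.
by move=> /andP[/and5P[-> -> -> -> ->] /andP[/and4P[-> -> -> ->] /andP[/and3P[-> -> ->] /andP[/andP[-> ->] /andP[-> _]]]]].
Qed.

Lemma two_elem (A : {set T}) a b c : #|A| = 2 -> a \in A -> b \in A -> a != b -> c \in A -> c = a \/ c = b.
Proof.
move=> cA aA bA nab cA'.
have: [set a; b] == A by rewrite eqEcard cA cards2 nab /= andbT; apply/subsetP=> x; rewrite !inE => /orP[]/eqP->.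
by move/eqP=> E; move: cA'; rewrite -E !inE => /orP[]/eqP; auto.
Qed.

Definition hex (R : rel T) (w0 w1 w2 w3 w4 w5 : T) : bool :=
  [&& R w0 w1, R w2 w1, R w2 w3, R w4 w3 &
   [&& R w4 w5, R w0 w5 & uniq [:: w0; w1; w2; w3; w4; w5]]].

Variable R : rel T.

Lemma hex_rot2 w0 w1 w2 w3 w4 w5 : hex R w0 w1 w2 w3 w4 w5 -> hex R w2 w3 w4 w5 w0 w1.
Proof.
case/and5P=> h1 h2 h3 h4 /and3P[h5 h6 hu]; rewrite /hex h3 h4 h5 h6 h1 h2 /=.
by have := hu; rewrite -(rot_uniq 2).
Qed.

Lemma hex_rev w0 w1 w2 w3 w4 w5 : hex R w0 w1 w2 w3 w4 w5 -> hex R w0 w5 w4 w3 w2 w1.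
Proof.
case/and5P=> h1 h2 h3 h4 /and3P[h5 h6 hu]; rewrite /hex h3 h4 h5 h6 h1 h2 /=.
by have := hu; rewrite -rev_uniq -(rot_uniq 5).
Qed.

Lemma hex_rot3 w0 w1 w2 w3 w4 w5 : hex R w0 w1 w2 w3 w4 w5 ->
   hex [rel x y | R y x] w3 w4 w5 w0 w1 w2.
Proof.
case/and5P=> h1 h2 h3 h4 /and3P[h5 h6 hu]; rewrite /hex /= h3 h4 h5 h6 h1 h2 /=.
by have := hu; rewrite -(rot_uniq 3).
Qed.

Lemma hex_map (g : T -> T) w0 w1 w2 w3 w4 w5 : (forall x y, R x y -> R (g x) (g y)) -> injective g ->
  hex R w0 w1 w2 w3 w4 w5 -> hex R (g w0) (g w1) (g w2) (g w3) (g w4) (g w5).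
Proof.
move=> gR ginj.
case/and5P=> h1 h2 h3 h4 /and3P[h5 h6 hu]; rewrite /hex !gR //=.
by have := hu; rewrite -(map_inj_uniq ginj).
Qed.

Lemma mem6P (u a b c d e f : T) : (u \in [:: a; b; c; d; e; f]) <->
  (u = a \/ u = b \/ u = c \/ u = d \/ u = e \/ u = f).
Proof.
rewrite !inE; split.
  by case/orP=> [/eqP|/orP[/eqP|/orP[/eqP|/orP[/eqP|/orP[/eqP|/eqP]]]]]; tauto.
by case=> [->|[->|[->|[->|[->|->]]]]]; rewrite eqxx ?orbT.
Qed.

Hypothesis outd : forall x, #|[set y | R x y]| = 2.
Hypothesis ind : forall x, #|[set y | R y x]| = 2.

Lemma out_other x a b c : R x a -> R x b -> a != b -> R x c -> c = a \/ c = b.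
Proof. by move=> ha hb nab hc; apply: (two_elem (outd x)); rewrite ?inE. Qed.

Lemma in_other x a b c : R a x -> R b x -> a != b -> R c x -> c = a \/ c = b.
Proof. by move=> ha hb nab hc; apply: (two_elem (ind x)); rewrite ?inE. Qed.

Lemma uniq_hex v a t h s b a' t' h' s' b' : hex R v a t h s b -> hex R v a' t' h' s' b' ->
  (a' = a /\ t' = t /\ h' = h /\ s' = s /\ b' = b) \/
  (a' = b /\ t' = s /\ h' = h /\ s' = t /\ b' = a).
Proof.
case/and5P=> h1 h2 h3 h4 /and3P[h5 h6 /uniq6[[n01 n02 n03 n04 n05] [[n12 n13 n14 n15] [[n23 n24 n25] [n34 n35 n45]]]]].
case/and5P=> k1 k2 k3 k4 /and3P[k5 k6 /uniq6[[m01 m02 m03 m04 m05] [[m12 m13 m14 m15] [[m23 m24 m25] [m34 m35 m45]]]]].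
have [Ea|Ea] := out_other h1 h6 n15 k1; subst a'.
- have [Eb|Eb] := out_other h1 h6 n15 k6; first by subst b'; rewrite eqxx in m15.
  subst b'.
  have [Et|Et] := in_other h1 h2 n02 k2; first by subst t'; rewrite eqxx in m02.
  subst t'. have [Eh|Eh] := out_other h2 h3 n13 k3; first by subst h'; rewrite eqxx in m13.
  subst h'. have [Es|Es] := in_other h6 h5 n04 k5; first by subst s'; rewrite eqxx in m04.
  subst s'. by left.
- have [Eb|Eb] := out_other h1 h6 n15 k6; last by subst b'; rewrite eqxx in m15.
  subst b'.
  have [Et|Et] := in_other h6 h5 n04 k2; first by subst t'; rewrite eqxx in m02.
  subst t'. have n35' : b != h by rewrite eq_sym.
  have [Eh|Eh] := out_other h5 h4 n35' k3; first by subst h'; rewrite eqxx in m13.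
  subst h'. have [Es|Es] := in_other h1 h2 n02 k5; first by subst s'; rewrite eqxx in m04.
  subst s'. by right.
Qed.
End Hex.

Section Antipode.
Variables (T : finType) (R : rel T) (G : {group {perm T}}).
Hypothesis outd : forall x, #|[set y | R x y]| = 2.
Hypothesis ind : forall x, #|[set y | R y x]| = 2.
Hypothesis Rinv : forall g x y, g \in G -> R x y -> R (g x) (g y).
Hypothesis Rtr : forall x y u w, R x y -> R u w -> exists2 g, g \in G & g x = u /\ g y = w.

Lemma antipode v a t h s b q0 q1 q2 q4 q5 w :
  hex R v a t h s b -> hex R q0 q1 q2 v q4 q5 -> w != v ->
  w \in [:: v; a; t; h; s; b] -> w \in [:: q0; q1; q2; v; q4; q5] ->
  (forall u, u \in [:: v; a; t; h; s; b] -> u \in [:: q0; q1; q2; v; q4; q5] -> u = v \/ u = w) ->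
  w = h.
Proof.
move=> HP HQ nwv wP wQ Hi.
have HP' := HP.
case/and5P: HP' => h1 _ _ _ /and3P[_ h6 /uniq6[[n01 n02 n03 n04 n05] [[n12 n13 n14 n15] [[n23 n24 n25] [n34 n35 n45]]]]].
have [g gG [gv ga]] := Rtr h1 h6.
have ginj : injective g := @perm_inj _ g.
have gR : forall x y, R x y -> R (g x) (g y) by move=> x y; apply: Rinv.
have gR' : forall x y, [rel x y | R y x] x y -> [rel x y | R y x] (g x) (g y) by move=> x y; apply: Rinv.
have := hex_map gR ginj HP; rewrite gv ga => HgP.
have [[E1 _]|[_ [gt [gh [gs gb]]]]] := uniq_hex outd ind HP HgP; first by rewrite E1 eqxx in n15.
have HQ3 := hex_rot3 HQ.
have := hex_map gR' ginj HQ3; rewrite gv => HgQ.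
have gQ : forall u, u \in [:: q0; q1; q2; v; q4; q5] -> g u \in [:: q0; q1; q2; v; q4; q5].
  have [[E4 [E5 [E0 [E1 E2]]]]|[E4 [E5 [E0 [E1 E2]]]]] :=
     uniq_hex (R := [rel x y | R y x]) ind outd HQ3 HgQ;
  by move=> u /mem6P[->|[->|[->|[->|[->|->]]]]]; rewrite ?E4 ?E5 ?E0 ?E1 ?E2 ?gv !inE eqxx ?orbT.
have gP : g w \in [:: v; a; t; h; s; b].
  by move/mem6P: wP => [->|[->|[->|[->|[->|->]]]]]; rewrite ?gv ?ga ?gt ?gh ?gs ?gb !inE eqxx ?orbT.
have [gwv|gww] := Hi _ gP (gQ _ wQ).
  by rewrite -gv in gwv; rewrite (ginj _ _ gwv) eqxx in nwv.
move: gww; move/mem6P: wP => [E|[E|[E|[E|[E|E]]]]]; subst w => //.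
- by rewrite eqxx in nwv.
- by rewrite ga => E; rewrite E eqxx in n15.
- by rewrite gt => E; rewrite E eqxx in n24.
- by rewrite gs => E; rewrite E eqxx in n24.
- by rewrite gb => E; rewrite E eqxx in n15.
Qed.

End Antipode.

Section Tau.
Variables (T : finType) (R : rel T) (f : T -> T).
Hypothesis outd : forall x, #|[set y | R x y]| = 2.
Hypothesis ind : forall x, #|[set y | R y x]| = 2.
Hypothesis hex_at : forall v, exists a t h s b, hex R v a t h s b.
Hypothesis f_hex : forall w0 w1 w2 w3 w4 w5, hex R w0 w1 w2 w3 w4 w5 -> f w0 = w3.

Lemma hex_at_out v w : R v w -> exists t h s b, hex R v w t h s b.
Proof.
move=> vw; have [a [t [h [s [b H]]]]] := hex_at v.
have H' := H; case/and5P: H' => h1 _ _ _ /and3P[_ h6 /uniq6[[n01 n02 n03 n04 n05] [[n12 n13 n14 n15] [[n23 n24 n25] [n34 n35 n45]]]]].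
have [->|->] := out_other outd h1 h6 n15 vw; first by exists t, h, s, b.
by exists s, h, t, a; apply: hex_rev.
Qed.

Lemma no_loop v : R v (f v) -> False.
Proof.
move=> H; have [a [t [h [s [b Hx]]]]] := hex_at v; rewrite (f_hex Hx) in H.
case/and5P: Hx => h1 _ _ _ /and3P[_ h6 /uniq6[[n01 n02 n03 n04 n05] [[n12 n13 n14 n15] [[n23 n24 n25] [n34 n35 n45]]]]].
by have [E|E] := out_other outd h1 h6 n15 H; rewrite E eqxx in n13 n35.
Qed.

Lemma no_common_out v w : R v w -> R (f v) w -> False.
Proof.
move=> vw fw; have [t [h [s [b Hx]]]] := hex_at_out vw; rewrite (f_hex Hx) in fw.
case/and5P: Hx => h1 h2 _ _ /and3P[_ h6 /uniq6[[n01 n02 n03 n04 n05] [[n12 n13 n14 n15] [[n23 n24 n25] [n34 n35 n45]]]]].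
by have [E|E] := in_other ind h1 h2 n02 fw; rewrite E eqxx in n03 n23.
Qed.

Lemma no_mixed v w : R v w -> R w (f v) -> False.
Proof.
move=> vw wf; have [t [h [s [b Hx]]]] := hex_at_out vw; rewrite (f_hex Hx) in wf.
case/and5P: Hx => h1 h2 h3 h4 /and3P[_ h6 /uniq6[[n01 n02 n03 n04 n05] [[n12 n13 n14 n15] [[n23 n24 n25] [n34 n35 n45]]]]].
have n24' : t != s by [].
by have [E|E] := in_other ind h3 h4 n24' wf; rewrite E eqxx in n12 n14.
Qed.
End Tau.

Lemma mem_rot3 (T : eqType) (u a b c d e f : T) :
  (u \in [:: d; e; f; a; b; c]) = (u \in [:: a; b; c; d; e; f]).
Proof. exact: (mem_rot 3 [:: a; b; c; d; e; f] u). Qed.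

Section Main.
Variables (T : finType) (e : rel T) (G : {group {perm T}}).
Hypotheses (esymm : symmetric e) (eirr : irreflexive e) (econ : connected_graph e)
  (tet : tetravalent e) (GA : G \subset GAut e) (vt : vertex_transitive G)
  (et : edge_transitive G e) (nart : ~ arc_transitive G e) (rad : rad_eq G e 3)
  (att : att_eq G e 2) (nbip : ~ bipartite e).
Variables x0 y0 : T.
Hypothesis e0 : e x0 y0.
Notation D := (orient G x0 y0).

Lemma GAutE g x y : g \in GAut e -> e (g x) (g y) = e x y.
Proof. by rewrite inE => /forallP/(_ x)/forallP/(_ y)/eqP. Qed.

Lemma GeE g x y : g \in G -> e (g x) (g y) = e x y.
Proof. by move=> /(subsetP GA); apply: GAutE. Qed.

Lemma orientP x y : reflect (exists2 g, g \in G & g x0 = x /\ g y0 = y) (D x y).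
Proof.
apply: (iffP existsP) => [[g /andP[gG /andP[/eqP <- /eqP <-]]]|[g gG [<- <-]]].
  by exists g.
by exists g; rewrite gG !eqxx.
Qed.

Lemma D_e x y : D x y -> e x y.
Proof. by case/orientP=> g gG [<- <-]; rewrite GeE. Qed.

Lemma D_inv g x y : g \in G -> D x y -> D (g x) (g y).
Proof.
move=> gG /orientP[h hG [<- <-]]; apply/orientP; exists (h * g)%g; first by rewrite groupM.
by rewrite !permM.
Qed.

Lemma D_tr x y u w : D x y -> D u w -> exists2 g, g \in G & g x = u /\ g y = w.
Proof.
case/orientP=> g1 g1G [<- <-] /orientP[g2 g2G [<- <-]].
exists (g1^-1 * g2)%g; first by rewrite groupM ?groupV.
by rewrite !permM !permK.
Qed.

Lemma e_D x y : e x y -> D x y || D y x.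
Proof.
move=> exy; have [g gG [[gx gy]|[gx gy]]] := et e0 exy; apply/orP; [left|right];
  by apply/orientP; exists g.
Qed.

Lemma D_asym x y : D x y -> D y x -> False.
Proof.
move=> dxy dyx; apply: nart => a b u w eab euw.
have allD : forall c d, e c d -> D c d.
  move=> c d ecd; case/orP: (e_D ecd) => // ddc.
  have [g gG [gx gy]] := D_tr dxy ddc.
  by rewrite -gx -gy; apply: D_inv.
exact: D_tr (allD _ _ eab) (allD _ _ euw).
Qed.

Ltac asym := match goal with H1 : is_true (D ?a ?b), H2 : is_true (D ?b ?a) |- _ =>
  exfalso; exact: D_asym H1 H2 end.

Lemma alt_hex s : alt_cycle G e x0 y0 s -> size s = 6 ->
  exists w0 w1 w2 w3 w4 w5, hex D w0 w1 w2 w3 w4 w5.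
Proof.
case: s => [|w0 [|w1 [|w2 [|w3 [|w4 [|w5 [|]]]]]]] //= [_ hu _ halt] _.
have hu' : uniq [:: w1; w2; w3; w4; w5; w0] by move: hu; rewrite -(rot_uniq 1).
have := halt 0 isT; have := halt 1 isT; have := halt 2 isT; have := halt 3 isT;
have := halt 4 isT; have := halt 5 isT => /=.
do 6 (case/orP=> /andP[? ?]).
all: try match goal with H1 : is_true (orient _ _ _ ?a ?b), H2 : is_true (orient _ _ _ ?b ?a) |- _ => case: (D_asym H1 H2) end.
all: first [ by exists w0, w1, w2, w3, w4, w5; apply/and5P; split; try done; apply/and3P
           | by exists w1, w2, w3, w4, w5, w0; apply/and5P; split; try done; apply/and3P ].
Qed.

Lemma hex_ex : exists w0 w1 w2 w3 w4 w5, hex D w0 w1 w2 w3 w4 w5.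
Proof. have [[s hs] hsz] := rad e0; exact: alt_hex hs (hsz s hs). Qed.

Lemma hex_mapG g w0 w1 w2 w3 w4 w5 : g \in G -> hex D w0 w1 w2 w3 w4 w5 ->
  hex D (g w0) (g w1) (g w2) (g w3) (g w4) (g w5).
Proof. move=> gG; apply: hex_map; [exact: (fun x y => @D_inv g x y gG) | exact: perm_inj]. Qed.

Lemma hex_at v : exists a t h s b, hex D v a t h s b.
Proof.
have [w0 [w1 [w2 [w3 [w4 [w5 H]]]]]] := hex_ex; have [g gG gw] := vt w0 v.
have := hex_mapG gG H; rewrite gw => H'.
by exists (g w1), (g w2), (g w3), (g w4), (g w5).
Qed.

Lemma hex_at3 v : exists q0 q1 q2 q4 q5, hex D q0 q1 q2 v q4 q5.
Proof.
have [w0 [w1 [w2 [w3 [w4 [w5 H]]]]]] := hex_ex; have [g gG gw] := vt w3 v.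
have := hex_mapG gG H; rewrite gw => H'.
by exists (g w0), (g w1), (g w2), (g w4), (g w5).
Qed.

Lemma deg2 v : #|[set y | D v y]| = 2 /\ #|[set y | D y v]| = 2.
Proof.
have [a [t [h [s [b H]]]]] := hex_at v.
have [q0 [q1 [q2 [q4 [q5 Q]]]]] := hex_at3 v.
case/and5P: H => h1 _ _ _ /and3P[_ h6 /uniq6[[_ _ _ _ _] [[_ _ _ n15] _]]].
case/and5P: Q => _ _ k3 k4 /and3P[_ _ /uniq6[_ [_ [[_ n24 _] _]]]].
have o2 : 2 <= #|[set y | D v y]|.
  have := cards2 a b; rewrite n15 => <-; apply: subset_leq_card.
  by apply/subsetP => y; rewrite !inE => /orP[]/eqP->.
have i2 : 2 <= #|[set y | D y v]|.
  have := cards2 q2 q4; rewrite n24 => <-; apply: subset_leq_card.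
  by apply/subsetP => y; rewrite !inE => /orP[]/eqP->.
have U : [set y | D v y] :|: [set y | D y v] = [set y | e v y].
  apply/setP => y; rewrite !inE; apply/idP/idP.
    by case/orP=> [/D_e|/D_e]; rewrite // esymm.
  exact: e_D.
have I : [set y | D v y] :&: [set y | D y v] = set0.
  apply/setP => y; rewrite !inE; apply/negbTE/andP => [[d1 d2]]; exact: D_asym d1 d2.
have := cardsUI [set y | D v y] [set y | D y v]; rewrite U I cards0 tet addn0.
lia.
Qed.

Lemma outd v : #|[set y | D v y]| = 2. Proof. exact: (deg2 v).1. Qed.
Lemma ind v : #|[set y | D y v]| = 2. Proof. exact: (deg2 v).2. Qed.

Definition tau v := odflt v [pick h | [exists a, exists t, exists s, exists b, hex D v a t h s b]].

Lemma tau_hex v a t h s b : hex D v a t h s b -> tau v = h.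
Proof.
move=> H; rewrite /tau; case: pickP => [h' /existsP[a' /existsP[t' /existsP[s' /existsP[b' H']]]]|none] /=.
  by have [[_ [_ [-> _]]]|[_ [_ [-> _]]]] := uniq_hex outd ind H H'.
have E : [exists a, exists t, exists s, exists b, hex D v a t h s b].
  by apply/existsP; exists a; apply/existsP; exists t; apply/existsP; exists s; apply/existsP; exists b.
by have := none h => /=; rewrite E.
Qed.

Lemma hex_alt w0 w1 w2 w3 w4 w5 : hex D w0 w1 w2 w3 w4 w5 ->
  alt_cycle G e x0 y0 [:: w0; w1; w2; w3; w4; w5].
Proof.
case/and5P=> h1 h2 h3 h4 /and3P[h5 h6 hu]; split => //.
  have e01 := D_e h1; have e23 := D_e h3; have e45 := D_e h5.
  have e12 : e w1 w2 by rewrite esymm D_e.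
  have e34 : e w3 w4 by rewrite esymm D_e.
  have e50 : e w5 w0 by rewrite esymm D_e.
  by rewrite /= e01 e12 e23 e34 e45 e50.
by move=> [|[|[|[|[|[|i]]]]]] //= _; rewrite ?h1 ?h2 ?h3 ?h4 ?h5 ?h6 ?orbT.
Qed.

Ltac kill := first [ match goal with H : is_true (?x != ?x) |- _ => by rewrite eqxx in H end
  | match goal with H1 : is_true (orient _ _ _ ?a ?b), H2 : is_true (orient _ _ _ ?b ?a) |- _ =>
       case: (D_asym H1 H2) end ].

Lemma edges_differ v a t h s b q0 q1 q2 q4 q5 : hex D v a t h s b -> hex D q0 q1 q2 v q4 q5 ->
  cycle_edges x0 [:: v; a; t; h; s; b] != cycle_edges x0 [:: q0; q1; q2; v; q4; q5].
Proof.
move=> HP HQ; apply/negP => /eqP E.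
case/and5P: HP => h1 _ _ _ _.
case/and5P: HQ => _ _ k3 k4 /and3P[_ _ /uniq6[[n01 n02 n03 n04 n05] [[n12 n13 n14 n15] [[n23 n24 n25] [n34 n35 n45]]]]].
have : (v, a) \in cycle_edges x0 [:: v; a; t; h; s; b].
  by rewrite inE; apply/existsP; exists (@Ordinal (size [:: v; a; t; h; s; b]) 0 isT); rewrite /= eqxx.
rewrite E inE => /existsP[[i Hi]]; move: Hi.
by case: i => [|[|[|[|[|[|i]]]]]] //= _; rewrite !xpair_eqE => /orP[]/andP[/eqP E1 /eqP E2]; subst; kill.
Qed.

Lemma D_tr' x y u w : D y x -> D w u -> exists2 g, g \in G & g x = u /\ g y = w.
Proof. by move=> d1 d2; have [g gG [? ?]] := D_tr d1 d2; exists g. Qed.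

Lemma tau_hex3 q0 q1 q2 v q4 q5 : hex D q0 q1 q2 v q4 q5 -> tau v = q0.
Proof.
move=> HQ; have [a [t [h [s [b HP]]]]] := hex_at v.
rewrite (tau_hex HP).
have [_ Hatt] := att e0.
have vin : (v \in [:: v; a; t; h; s; b]) && (v \in [:: q0; q1; q2; v; q4; q5]).
  by rewrite !inE !eqxx !orbT.
have := Hatt _ _ (hex_alt HP) (hex_alt HQ) (edges_differ HP HQ) (ex_intro _ v vin).
set S := [set _ | _] => cS.
have vS : v \in S by rewrite inE.
have [w [nwv Sw]] : exists w, w != v /\ S = [set v; w].
  have /cards2P[x [y [nxy Exy]]] : #|S| == 2 by rewrite cS.
  move: vS; rewrite Exy !inE => /orP[]/eqP Ev; subst.
    by exists y; rewrite eq_sym.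
  by exists x; rewrite setUC.
have : w \in S by rewrite Sw !inE eqxx orbT.
rewrite inE => /andP[wP wQ].
have Hi : forall u, u \in [:: v; a; t; h; s; b] -> u \in [:: q0; q1; q2; v; q4; q5] -> u = v \/ u = w.
  move=> u uP uQ; have : u \in S by rewrite inE uP uQ.
  by rewrite Sw !inE => /orP[]/eqP; auto.
have E1 := antipode outd ind (@D_inv) (@D_tr) HP HQ nwv wP wQ Hi.
have E2 := antipode (R := [rel x y | D y x]) ind outd (fun g x y gG => @D_inv g y x gG) (@D_tr')
  (hex_rot3 HQ) (hex_rot3 HP) nwv.
have wQ' : w \in [:: v; q4; q5; q0; q1; q2] by rewrite mem_rot3.
have wP' : w \in [:: h; s; b; v; a; t] by rewrite mem_rot3.
rewrite -E1 (E2 wQ' wP') //.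
by move=> u uQ uP; apply: Hi; rewrite -mem_rot3.
Qed.

Lemma tau_tau v : tau (tau v) = v.
Proof. have [q0 [q1 [q2 [q4 [q5 Q]]]]] := hex_at3 v; by rewrite (tau_hex3 Q) (tau_hex Q). Qed.

Lemma tau_neq v : tau v != v.
Proof.
have [a [t [h [s [b H]]]]] := hex_at v; rewrite (tau_hex H).
by case/and5P: H => _ _ _ _ /and3P[_ _ /uniq6[[_ _ n03 _ _] _]]; rewrite eq_sym.
Qed.

Lemma tau_G g v : g \in G -> tau (g v) = g (tau v).
Proof. by move=> gG; have [a [t [h [s [b H]]]]] := hex_at v; rewrite (tau_hex H) (tau_hex (hex_mapG gG H)). Qed.

Lemma hex_at_outD x y : D x y -> exists t h s b, hex D x y t h s b.
Proof. exact: (hex_at_out outd hex_at). Qed.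

Lemma tau_rev x y : D x y -> D (tau y) (tau x).
Proof.
move=> dxy; have [t [h [s [b H]]]] := hex_at_outD dxy.
rewrite (tau_hex H) (tau_hex3 (hex_rot2 (hex_rot2 H))).
by case/and5P: H.
Qed.

Lemma tau_e x y : e (tau x) (tau y) = e x y.
Proof.
have imp : forall x y, e x y -> e (tau x) (tau y).
  by move=> a b /e_D/orP[]/tau_rev/D_e //; rewrite esymm.
by apply/idP/idP; last exact: imp; move/imp; rewrite !tau_tau.
Qed.

Lemma hexD'_at v : exists a t h s b, hex [rel x y | D y x] v a t h s b.
Proof.
have [q0 [q1 [q2 [q4 [q5 Q]]]]] := hex_at3 v.
by exists q4, q5, q0, q1, q2; apply: hex_rot3.
Qed.

Lemma tau_hex' w0 w1 w2 w3 w4 w5 : hex [rel x y | D y x] w0 w1 w2 w3 w4 w5 -> tau w0 = w3.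
Proof. by move/hex_rot3 => H; apply: tau_hex3 H. Qed.

Lemma no_edge v : e v (tau v) -> False.
Proof.
case/e_D/orP => d; first exact: (no_loop outd hex_at tau_hex d).
exact: (no_loop (R := [rel x y | D y x]) ind hexD'_at tau_hex' d).
Qed.

Lemma no_common v w : e v w -> e (tau v) w -> False.
Proof.
move=> /e_D/orP[] d1 /e_D/orP[] d2.
- exact: (no_common_out outd ind hex_at tau_hex d1 d2).
- exact: (no_mixed outd ind hex_at tau_hex d1 d2).
- exact: (no_mixed (R := [rel x y | D y x]) ind outd hexD'_at tau_hex' d1 d2).
- exact: (no_common_out (R := [rel x y | D y x]) ind outd hexD'_at tau_hex' d1 d2).
Qed.

Definition tpair x : {set T} := [set x; tau x].
Definition T' := {A : {set T} | [exists x, A == tpair x]}.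

Lemma pP x : [exists y, tpair x == tpair y].
Proof. by apply/existsP; exists x. Qed.

Definition p x : T' := Sub (tpair x) (pP x).

Lemma p_eqP x y : p x = p y <-> y = x \/ y = tau x.
Proof.
split.
  move/(congr1 val) => /= E.
  have : y \in tpair y by rewrite !inE eqxx.
  by rewrite -E !inE => /orP[]/eqP; auto.
case=> ->; first done.
by apply: val_inj; rewrite /= /tpair tau_tau setUC.
Qed.

Lemma p_tau x : p (tau x) = p x.
Proof. by apply/p_eqP; right; rewrite tau_tau. Qed.

Lemma p_surj A : exists x, p x = A.
Proof. by case: A => A PA; case/existsP: (PA) => x /eqP E; exists x; apply: val_inj; rewrite /= E. Qed.

Definition e' : rel T' := fun A B => [exists x, exists y, [&& p x == A, p y == B & e x y]].

Lemma e'P x y : e' (p x) (p y) = e x y || e x (tau y).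
Proof.
apply/existsP/orP.
  case=> x1 /existsP[y1 /and3P[/eqP E1 /eqP E2 exy]].
  have Hx : x1 = x \/ x1 = tau x by apply/p_eqP; rewrite E1.
  have Hy : y1 = y \/ y1 = tau y by apply/p_eqP; rewrite E2.
  case: Hx => Ex; case: Hy => Ey; subst x1 y1.
  - by left.
  - by right.
  - by right; rewrite -(tau_e (tau x) y) tau_tau in exy.
  - by left; rewrite tau_e in exy.
case=> h; [exists x; apply/existsP; exists y | exists x; apply/existsP; exists (tau y)];
  by rewrite ?p_tau !eqxx h.
Qed.

Lemma e'_sym : symmetric e'.
Proof.
move=> A B; have [x <-] := p_surj A; have [y <-] := p_surj B.
have E : e x (tau y) = e y (tau x) by rewrite -tau_e tau_tau esymm.
by rewrite !e'P E [e x y]esymm.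
Qed.

Lemma e'_irr : irreflexive e'.
Proof.
move=> A; have [x <-] := p_surj A; rewrite e'P eirr /=.
by apply/negP => /no_edge.
Qed.

Lemma connect_p x y : connect e x y -> connect e' (p x) (p y).
Proof.
move/connectP=> [s ps ->]; elim: s x ps => [x _|z s IH x /andP[exz ps]] /=; first exact: connect0.
apply: connect_trans (IH _ ps); apply: connect1; by rewrite e'P exz.
Qed.

Definition rep (A : T') : T := odflt x0 [pick x | p x == A].

Lemma p_rep A : p (rep A) = A.
Proof.
rewrite /rep; case: pickP => [x /eqP //|none].
by have [x Ex] := p_surj A; have := none x; rewrite /= Ex eqxx.
Qed.

Lemma pG g a b : g \in G -> p a = p b -> p (g a) = p (g b).
Proof.
move=> gG /p_eqP[->|->]; first done.
by rewrite -tau_G // p_tau.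
Qed.

Definition fmap (g : {perm T}) (A : T') := p (g (rep A)).

Lemma fmap_p g x : g \in G -> fmap g (p x) = p (g x).
Proof. by move=> gG; apply: pG; rewrite ?p_rep. Qed.

Lemma fmap_inj g : g \in G -> injective (fmap g).
Proof.
move=> gG A B; have [x <-] := p_surj A; have [y <-] := p_surj B; rewrite !fmap_p //.
by move/(pG (groupVr gG)); rewrite !permK.
Qed.

Definition indp_def g : {perm T'} := odflt 1%g [pick h : {perm T'} | [forall A, h A == fmap g A]].
Fact indp_key : unit. Proof. by []. Qed.
Definition indp := locked_with indp_key indp_def.

Lemma indp_p g x : g \in G -> indp g (p x) = p (g x).
Proof.
move=> gG; rewrite /indp locked_withE /indp_def; case: pickP => [h /forallP/(_ (p x))/eqP -> /=|none].
  exact: fmap_p.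
have := none (perm (fmap_inj gG)); rewrite /= => /negbT/negP; case.
by apply/forallP => A; rewrite permE.
Qed.

Lemma indpM g1 g2 : g1 \in G -> g2 \in G -> indp (g1 * g2)%g = (indp g1 * indp g2)%g.
Proof.
move=> g1G g2G; apply/permP => A; have [x <-] := p_surj A.
have g12 : (g1 * g2)%g \in G by rewrite groupM.
have E1 := indp_p x g1G.
have E2 := indp_p (g1 x) g2G.
have E3 := indp_p x g12.
rewrite [RHS]permM E1 E2 E3.
by rewrite permM.
Qed.

Lemma indp1 : indp 1%g = 1%g.
Proof. by apply/permP => A; have [x <-] := p_surj A; rewrite indp_p ?group1 // !perm1. Qed.

Definition Hset := [set indp g | g in G].

Lemma Hgs : group_set Hset.
Proof.
apply/group_setP; split; first by apply/imsetP; exists 1%g; rewrite ?group1 ?indp1.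
move=> h1 h2 /imsetP[g1 g1G ->] /imsetP[g2 g2G ->]; rewrite -indpM //.
by apply: imset_f; exact: groupM.
Qed.

Lemma lift_arc x y u w : e x y -> e u w -> exists2 g, g \in G & p (g x) = p u /\ p (g y) = p w.
Proof.
move=> /e_D/orP[] dxy /e_D/orP[] duw.
- by have [g gG [E1 E2]] := D_tr dxy duw; exists g; rewrite ?E1 ?E2.
- by have [g gG [E1 E2]] := D_tr dxy (tau_rev duw); exists g; rewrite ?E1 ?E2 ?p_tau.
- by have [g gG [E1 E2]] := D_tr dxy (tau_rev duw); exists g; rewrite ?E1 ?E2 ?p_tau.
- by have [g gG [E1 E2]] := D_tr dxy duw; exists g; rewrite ?E1 ?E2.
Qed.

Lemma CT_cases c : c \in CT e p -> c = 1%g \/ (forall x, c x = tau x).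
Proof.
rewrite inE => /andP[cA /forallP cp].
have cx : forall x, c x = x \/ c x = tau x by move=> x; apply/p_eqP; apply/esym/eqP.
have cl : closed e [pred x | c x == x].
  apply: (intro_closed (sym_connect_sym esymm)) => x y exy /= /eqP cxx.
  rewrite inE; case: (cx y) => [->//|cyt]; exfalso.
  have ext : e x (tau y) by rewrite -cxx -cyt GAutE.
  by apply: (@no_common y x); rewrite esymm.
case: (boolP (c x0 == x0)) => c0.
  left; apply/permP => y; rewrite perm1; apply/eqP.
  by rewrite -[_ == _]/(y \in [pred z | c z == z]) -(closed_connect cl (econ x0 y)).
right => y; case: (cx y) => // cyy; exfalso.
move: c0; rewrite -[c x0 == x0]/(x0 \in [pred z | c z == z]) (closed_connect cl (econ x0 y)).
by rewrite inE cyy eqxx.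
Qed.

Lemma G_CT g : g \in G -> (forall x, g x = tau x) -> False.
Proof.
move=> gG Hg.
have d0 : D x0 y0 by apply/orientP; exists 1%g; rewrite ?group1 ?perm1.
have := D_inv gG d0; rewrite !Hg => d1.
exact: D_asym (tau_rev d0) d1.
Qed.

Lemma GAut_mul a b : a \in GAut e -> b \in GAut e -> (a * b)%g \in GAut e.
Proof.
move=> aA bA; rewrite inE; apply/forallP => x; apply/forallP => y.
by rewrite !permM !GAutE.
Qed.

Let HG := Group Hgs.

Lemma G_L g : g \in G -> g \in lifted_group e p HG.
Proof.
move=> gG; rewrite inE (subsetP GA) //=; apply/existsP; exists (indp g); apply/andP; split.
  exact: imset_f.
by apply/forallP => x; rewrite indp_p.
Qed.

Lemma L_dec l : l \in lifted_group e p HG -> exists2 g, g \in G & (l * g^-1)%g \in CT e p.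
Proof.
rewrite inE => /andP[lA /existsP[h /andP[/imsetP[g gG ->] /forallP Hl]]].
exists g => //; rewrite inE; apply/andP; split.
  by apply: GAut_mul lA _; apply: (subsetP GA); rewrite groupV.
apply/forallP => x; rewrite permM.
have := eqP (Hl x); rewrite indp_p // => E.
by have := pG (groupVr gG) E; rewrite permK => ->.
Qed.

Lemma one_CT : 1%g \in CT e p.
Proof.
rewrite inE; apply/andP; split; last by apply/forallP => x; rewrite perm1.
by rewrite inE; apply/forallP => x; apply/forallP => y; rewrite !perm1.
Qed.

Lemma G_compl : G \in complements_to_in (CT e p) (lifted_group e p HG).
Proof.
rewrite inE; apply/andP; split.
  apply/eqP/setP => c; rewrite in_setI in_set1; apply/andP/eqP => [[cCT cG]|->].
    by case: (CT_cases cCT) => // Ht; case: (G_CT cG Ht).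
  by rewrite one_CT group1.
apply/eqP/setP => l; apply/idP/idP.
  case/mulsgP => c g cCT gG ->.
  have cCT' := cCT; rewrite inE in cCT'; case/andP: cCT' => cA /forallP cp.
  rewrite inE; apply/andP; split; first by apply: GAut_mul cA (subsetP GA _ gG).
  apply/existsP; exists (indp g); apply/andP; split; first exact: imset_f.
  apply/forallP => x; rewrite permM indp_p //; apply/eqP/pG => //.
  exact/eqP.
by move/L_dec => [g gG cCT]; rewrite -(mulgKV g l); exact: mem_mulg.
Qed.

Theorem main_cover : exists (T'0 : finType) (e'0 : rel T'0) (p0 : T -> T'0) (H : {group {perm T'0}}),
    [/\ simple_graph e'0, covering_projection e e'0 p0, k_fold p0 2,
        H \subset GAut e'0 /\ arc_transitive H e'0 &
        nonsectional_split e p0 H].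
Proof.
exists T', e', p, HG; split.
- by split; [exact: e'_sym | exact: e'_irr].
- split => //.
  + move=> A B; have [x <-] := p_surj A; have [y <-] := p_surj B; exact: connect_p (econ x y).
  + exact: p_surj.
  + by move=> x y exy; rewrite e'P exy.
  + move=> x; split.
      move=> y z; rewrite !inE => exy exz /p_eqP [//|Ez]; exfalso.
      by apply: (@no_common y x); rewrite esymm // -Ez.
    apply/setP => B; rewrite inE; apply/imsetP/idP.
      by case=> y; rewrite inE => exy ->; rewrite e'P exy.
    have [y <-] := p_surj B; rewrite e'P => /orP[exy|exy]; [exists y | exists (tau y)];
      by rewrite ?inE ?p_tau.
- move=> A; have [y <-] := p_surj A.
  have -> : [set x | p x == p y] = [set y; tau y].
    apply/setP => x; rewrite !inE; apply/idP/idP => [/eqP/esym/p_eqP[]->|/orP[]/eqP->];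
      by rewrite ?eqxx ?orbT ?p_tau.
  by rewrite cards2 eq_sym tau_neq.
- split.
  + apply/subsetP => h /imsetP[g gG ->]; rewrite inE; apply/forallP => A; apply/forallP => B; apply/eqP.
    have [x <-] := p_surj A; have [y <-] := p_surj B.
    rewrite (indp_p x gG) (indp_p y gG).
    rewrite !e'P (tau_G y gG).
    by rewrite (GeE x y gG) (GeE x (tau y) gG).
  + move=> A B C D' /existsP[x /existsP[y /and3P[/eqP<- /eqP<- exy]]]
       /existsP[u /existsP[w /and3P[/eqP<- /eqP<- euw]]].
    have [g gG [E1 E2]] := lift_arc exy euw.
    by exists (indp g); [exact: imset_f | rewrite !indp_p].
split; first split.
- move=> h /imsetP[g gG ->]; exists g; first exact: (subsetP GA).
  by move=> x; rewrite indp_p.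
- by apply/set0Pn; exists G; exact: G_compl.
move=> K; rewrite inE => /andP[_ /eqP EK] [S [SK S1]].
have tS : forall x, (tau x \in S) = ~~ (x \in S).
  move=> x; have := S1 (p x).
  case: (boolP (x \in S)) => xS; case: (boolP (tau x \in S)) => tS //=.
    have sub : [set x; tau x] \subset [set z in S | p z == p x].
      by apply/subsetP => z; rewrite !inE => /orP[]/eqP->; rewrite ?xS ?tS ?p_tau eqxx.
    by move=> c1; have := subset_leq_card sub; rewrite cards2 eq_sym tau_neq c1.
  rewrite (_ : [set z in S | p z == p x] = set0) ?cards0 //.
  apply/setP => z; rewrite !inE; apply/negbTE/andP => [[zS /eqP /esym /p_eqP [] E]]; subst z.
    by rewrite zS in xS.
  by rewrite zS in tS.
have Gcol : forall g, g \in G -> exists b, forall x, (g x \in S) = (x \in S) (+) b.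
  move=> g gG; have : g \in (CT e p * K)%g by rewrite EK G_L.
  case/mulsgP => c k cCT kK Eg.
  case: (CT_cases cCT) => [c1|ct].
    rewrite c1 mul1g in Eg; subst k.
    exists false => x; rewrite addbF.
    case: (boolP (x \in S)) => xS; first exact: SK.
    have : tau x \in S by rewrite tS.
    by move/(SK _ _ kK); rewrite -tau_G // tS => /negbTE.
  have kg : forall z, k z = g (tau z) by move=> z; rewrite Eg permM ct tau_tau.
  exists true => x; rewrite addbT.
  case: (boolP (x \in S)) => xS /=.
    by have := SK _ _ kK xS; rewrite kg -tau_G // tS => /negbTE.
  have : tau x \in S by rewrite tS.
  by move/(SK _ _ kK); rewrite kg tau_tau.
have Dcol : forall x y, D x y -> (x \in S) (+) (y \in S) = (x0 \in S) (+) (y0 \in S).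
  move=> x y /orientP[g gG [<- <-]]; have [b Hb] := Gcol g gG; rewrite !Hb.
  by clear Hb; case: b; case: (x0 \in S); case: (y0 \in S).
case: (boolP ((x0 \in S) (+) (y0 \in S))) => d.
  apply: nbip; exists (fun x => x \in S) => x y /e_D/orP[]/Dcol; rewrite d;
    by case: (x \in S); case: (y \in S).
have cl : closed e [pred x | x \in S].
  move=> x y /e_D/orP[]/Dcol; rewrite (negbTE d) /=;
    by case: (x \in S); case: (y \in S).
by have := closed_connect cl (econ x0 (tau x0)); rewrite !inE tS; case: (x0 \in S).
Qed.
End Main.

Unset Implicit Arguments.

Theorem theorem4p1 (T : finType) (e : rel T) (G : {group {perm T}}) :
  simple_graph e -> connected_graph e -> ~ bipartite e -> tetravalent e ->
  G \subset GAut e -> half_arc_transitive G e ->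
  12 < #|T| -> rad_eq G e 3 -> att_eq G e 2 ->
  exists (T' : finType) (e' : rel T') (p : T -> T') (H : {group {perm T'}}),
    [/\ simple_graph e', covering_projection e e' p, k_fold p 2,
        H \subset GAut e' /\ arc_transitive H e' &
        nonsectional_split e p H].
Proof.
move=> [esymm eirr] econ nbip tet GA [vt et nart] H12 rad att.
have /card_gt0P[x0 _] : 0 < #|T| by apply: leq_ltn_trans H12.
have /card_gt0P[y0] : 0 < #|[set y | e x0 y]| by rewrite tet.
rewrite inE => e0.
by eapply main_cover; eassumption.
Qed.
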